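(* In the setting described in the context, the mapping $\psi^a$ is a monotone $\gamma$-CRS with regards to $h$.
   Context: Let $I=\{1,\dots,n\}$ be a set of items, $B$ a positive integer, $[B]=\{1,\dots,B\}$, $[0;B]=\{0,1,\dots,B\}$; for $u,w\in[0;B]^I$, $u\le w$ means coordinatewise. Let $f:[0;B]^I\to\mathbb{R}_{\ge0}$ be monotone and lattice submodular ($f(u\vee s\mathbf{1}_i)-f(u)\ge f(w\vee s\mathbf{1}_i)-f(w)$ for all $u\le w$, $s\in[0;B]$, $i\in I$, with $\vee$ the coordinatewise max and $\mathbf{1}_i$ the $i$-th unit vector). Each item $i$ has a random state $\Phi(i)\in[B]$, independent across items, with known distribution $p_i(s)=\Pr[\Phi(i)=s]$. Item $i$ in state $s$ has a nonnegative integer cost $c_i(s)$, with $c_i(s)\ge c_i(s')$ whenever $s\ge s'$. $C$ is a positive integer budget and $\mathcal{I}^{out}\subseteq 2^I$ is a downward-closed family. For $S\subseteq I$ and a realization $\phi\in[B]^I$, $\phi_S\in[0;B]^I$ equals $\phi(i)$ for $i\in S$ and $0$ otherwise; $\overline{f}(S)=\mathbb{E}[f(\Phi_S)]$, and $F(\overline{x})=\sum_{U\subseteq I}\prod_{i\in U}\overline{x}(i)\prod_{i\notin U}(1-\overline{x}(i))\overline{f}(U)$ is the multilinear extension. Let $P_{\mathcal{I}^{out}}=\mathrm{conv}\{\mathbf{1}_S: S\in\mathcal{I}^{out}\}$. (β,γ)-balanced CRS: for $\beta,\gamma\in[0,1]$, a monotone $(\beta,\gamma)$-balanced CRS for $\mathcal{I}^{out}$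 is a (possibly randomized) scheme that, for any $\overline{z}\in\beta\cdot P_{\mathcal{I}^{out}}$ and the random set $R$ containing each $i$ independently with probability $\overline{z}(i)$, maps $R$ to $\chi(R)\subseteq R$ with $\chi(R)\in\mathcal{I}^{out}$, such that $\Pr[i\in\chi(R)\mid i\in R]\ge\gamma$ for all $i$ (probability over $R$ and the scheme's randomness), and monotone: for $i\in R\subseteq R'$, $\Pr[i\in\chi(R)]\ge\Pr[i\in\chi(R')]$. Problem P1: variables $x(i,t)\ge0$ for $i\in I$, $t\in\{1,\dots,C-c_i(B)\}$, with $\overline{x}(i)=\sum_{t=1}^{C-c_i(B)}x(i,t)$; maximize $F(\overline{x})$ subject to $\overline{x}(i)\le1$, $\overline{x}\in P_{\mathcal{I}^{out}}$, and for all $t\in\{1,\dots,C\}$: $\sum_{i\in I}\mathbb{E}[\min\{c_i(\Phi(i)),t\}]\sum_{t'=1}^{t}x(i,t')\le 2t$. Assume a monotone $(\beta,\gamma)$-balanced CRS $\chi^{io}$ for $\mathcal{I}^{out}$ exists. Let $y$ be the solution of P1 computed by the stochastic continuous greedy algorithm of Asadpour and Nazerzadeh (2016) with stopping time $l=\min\{\beta,1/4\}$ and step size $\delta=o(n^{-3})$, with $\overline{y}(i)=\sum_t y(i,t)$. Distribution $h$: the random vector $v\in[0;B]^I$ has independent coordinates with $\Pr[v(i)=j]=h(i,j)=p_i(j)\overline{y}(i)$ for $j\in[B]$ and $\Pr[v(i)=0]=h(i,0)=1-\overline{y}(i)$. Let $R(v)=\{i: v(i)\ne0\}$. Mapping $\psi^a$: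 apply $\chi^{io}$ (with $\overline{z}=\overline{y}$) to $R(v)$; set $\psi^a(v)(i)=v(i)$ if $i\in\chi^{io}(R(v))$ and $\psi^a(v)(i)=0$ otherwise. An $\alpha$-CRS with regards to $h$ is a (possibly randomized) mapping $\psi$ on $[0;B]^I$ with $\psi(v)(i)\in\{0,v(i)\}$ for all $i$, and $\Pr[\psi(v)(i)=j\mid v(i)=j]\ge\alpha$ for all $i\in I$, $j\in[B]$ (probability over $v\sim h$ and the randomness of $\psi$). It is monotone if for all $u,w$ with $u(i)=w(i)$ and $u\le w$, $\Pr[\psi(u)(i)=u(i)]\ge\Pr[\psi(w)(i)=w(i)]$ (probability over the randomness of $\psi$ only). *)

(* Defs.v *)
(* Items I = 'I_n, states [0;B] = 'I_B.+1 (0 = "not present").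
   Randomized maps are modelled by their output distributions
   (finite supports, since everything is finite). *)
From mathcomp Require Import all_boot all_order all_algebra.
Set Implicit Arguments. Unset Strict Implicit. Unset Printing Implicit Defensive.
Import Order.TTheory GRing.Theory Num.Theory.
Local Open Scope ring_scope.

Section Defs.
Variable R : realFieldType.

Definition is_dist (A : finType) (mu : A -> R) : Prop :=
  (forall a, 0 <= mu a) /\ \sum_a mu a = 1.

Definition downward_closed n (F : pred {set 'I_n}) : Prop :=
  forall S T : {set 'I_n}, T \subset S -> F S -> F T.

(* z \in b * P_F, where P_F = conv { 1_S : S \in F } *)
Definition in_scaled_polytope n (F : pred {set 'I_n}) (b : R) (z : 'I_n -> R) : Prop :=
  exists lam : {set 'I_n} -> R,
    [/\ forall S, 0 <= lam S,
        forall S, ~~ F S -> lam S = 0,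
        \sum_(S : {set 'I_n}) lam S = 1
      & forall i, z i = b * \sum_(S : {set 'I_n} | i \in S) lam S].

Definition prob_set n (z : 'I_n -> R) (S : {set 'I_n}) : R :=
  (\prod_(i in S) z i) * \prod_(i in ~: S) (1 - z i).

(* A randomized contention resolution scheme: chi z Rs S = Pr[chi(Rs) = S]
   when the scheme is run for the vector z on the set Rs. *)
Definition crs_type n := ('I_n -> R) -> {set 'I_n} -> {set 'I_n} -> R.

Definition pr_sel n (chi : crs_type n) z (Rs : {set 'I_n}) (i : 'I_n) : R :=
  \sum_(S : {set 'I_n} | i \in S) chi z Rs S.

(* The conditional probability
   Pr[i \in chi(R) | i \in R] >= gamma is stated in multiplied-out form
   Pr[i \in chi(R) /\ i \in R] >= gamma * Pr[i \in R] (Pr[i \in R] = z i). *)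
Definition monotone_balanced_CRS n (F : pred {set 'I_n}) (beta gamma : R)
    (chi : crs_type n) : Prop :=
  forall z, in_scaled_polytope F beta z ->
  [/\ forall Rs, is_dist (chi z Rs),
      forall Rs S, 0 < chi z Rs S -> S \subset Rs /\ F S,
      forall i, \sum_(Rs : {set 'I_n} | i \in Rs) prob_set z Rs * pr_sel chi z Rs i >= gamma * z i
    & forall i (Rs Rs' : {set 'I_n}), i \in Rs -> Rs \subset Rs' ->
        pr_sel chi z Rs i >= pr_sel chi z Rs' i].

Definition hval n B (p : 'I_n -> 'I_B.+1 -> R) (ybar : 'I_n -> R)
    (i : 'I_n) (j : 'I_B.+1) : R :=
  if j == ord0 then 1 - ybar i else p i j * ybar i.

Definition hprob n B (p : 'I_n -> 'I_B.+1 -> R) (ybar : 'I_n -> R)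
    (v : {ffun 'I_n -> 'I_B.+1}) : R :=
  \prod_i hval p ybar i (v i).

(* randomized mapping on [0;B]^I : psi v w = Pr[psi(v) = w] *)
Definition vmap_type n B := {ffun 'I_n -> 'I_B.+1} -> {ffun 'I_n -> 'I_B.+1} -> R.

(* alpha-CRS with regards to the distribution hd on [0;B]^I (conditional
   probability again in multiplied-out form) *)
Definition alpha_CRS n B (hd : {ffun 'I_n -> 'I_B.+1} -> R) (psi : vmap_type n B)
    (alpha : R) : Prop :=
  [/\ forall v, is_dist (psi v),
      forall v w, 0 < psi v w -> forall i, w i = ord0 \/ w i = v i
    & forall i (j : 'I_B.+1), j != ord0 ->
        \sum_(v : {ffun 'I_n -> 'I_B.+1} | v i == j) hd v * \sum_(w : {ffun 'I_n -> 'I_B.+1} | w i == j) psi v w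
          >= alpha * \sum_(v : {ffun 'I_n -> 'I_B.+1} | v i == j) hd v].

Definition monotone_vmap n B (psi : vmap_type n B) : Prop :=
  forall i (u w : {ffun 'I_n -> 'I_B.+1}), u i = w i -> (forall k, u k <= w k)%N ->
    \sum_(x : {ffun 'I_n -> 'I_B.+1} | x i == u i) psi u x >= \sum_(x : {ffun 'I_n -> 'I_B.+1} | x i == w i) psi w x.

Definition supp_set n B (v : {ffun 'I_n -> 'I_B.+1}) : {set 'I_n} :=
  [set i | v i != ord0].

Definition restrict n B (v : {ffun 'I_n -> 'I_B.+1}) (S : {set 'I_n}) :
  {ffun 'I_n -> 'I_B.+1} := [ffun i => if i \in S then v i else ord0].

Definition psi_a n B (chi : crs_type n) (ybar : 'I_n -> R) : vmap_type n B :=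
  fun v w => \sum_(S : {set 'I_n}) chi ybar (supp_set v) S * (w == restrict v S)%:R.

End Defs.

(* Main.v *)
Require Import Defs.
From mathcomp Require Import all_boot all_order all_algebra.
Import Order.TTheory GRing.Theory Num.Theory.
Local Open Scope ring_scope.

Section Aux.
Variables (R : realFieldType) (n B : nat).
Implicit Types (v : {ffun 'I_n -> 'I_B.+1}).

Lemma sum_family_h (p : 'I_n -> 'I_B.+1 -> R) y (P : pred {ffun 'I_n -> 'I_B.+1})
   (Q : 'I_n -> pred 'I_B.+1) :
  (forall v, P v = [forall k, Q k (v k)]) ->
  \sum_(v | P v) hprob p y v = \prod_k \sum_(j | Q k j) hval p y k j.
Proof.
move=> HP; rewrite bigA_distr_big_dep; apply: eq_bigl => v.
rewrite HP; apply/forallP/familyP => H k; exact: H.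
Qed.

Lemma sum_psi_eq (chi : crs_type R n) ybar v i (j : 'I_B.+1) :
  \sum_(x : {ffun 'I_n -> 'I_B.+1} | x i == j) psi_a (B:=B) chi ybar v x =
  \sum_(S : {set 'I_n}) chi ybar (supp_set v) S * (restrict v S i == j)%:R.
Proof.
rewrite /psi_a exchange_big /=; apply: eq_bigr => S _.
rewrite -big_distrr /=; congr (_ * _).
rewrite big_mkcond /= (bigD1 (restrict v S)) //= big1 ?addr0.
  by rewrite eqxx; case: (_ == j).
by move=> x /negbTE ->; case: ifP.
Qed.

Lemma sum_sel_nz (chi : crs_type R n) z v i :
  v i != ord0 ->
  \sum_(S : {set 'I_n}) chi z (supp_set v) S * (restrict v S i == v i)%:R = pr_sel chi z (supp_set v) i.
Proof.
move=> Hv; rewrite /pr_sel [RHS]big_mkcond /=; apply: eq_bigr => S _.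
rewrite ffunE; case: (i \in S); first by rewrite eqxx mulr1.
by rewrite eq_sym (negbTE Hv) mulr0.
Qed.

Lemma sum_sel_z (chi : crs_type R n) z v i :
  v i == ord0 ->
  \sum_(S : {set 'I_n}) chi z (supp_set v) S * (restrict v S i == v i)%:R = \sum_(S : {set 'I_n}) chi z (supp_set v) S.
Proof.
move=> Hv; apply: eq_bigr => S _.
by rewrite ffunE; case: ifP => _; rewrite ?eqxx ?mulr1 // (eqP Hv) eqxx mulr1.
Qed.

End Aux.



Lemma poly_mono (R : realFieldType) n (F : pred {set 'I_n}) (Hdc : downward_closed F)
  (b b' : R) (z : 'I_n -> R) :
  0 <= b' <= b -> in_scaled_polytope F b' z -> in_scaled_polytope F b z.
Proof.
move=> /andP[b'0 b'b] [lam [lam0 lamF lam1 lamz]].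
have [b0|bpos] := eqVneq b 0.
  have eb : b' = b by apply/eqP; rewrite eq_le b'b b0 b'0.
  by exists lam; split => // i; rewrite lamz eb.
have [S HS] : exists S, lam S != 0.
  case: (pickP (fun S => lam S != 0)) => [S HS|H]; first by exists S.
  exfalso; move: lam1; rewrite big1 => [|S _]; first by move/eqP; rewrite eq_sym oner_eq0.
  by move/negbT: (H S); rewrite negbK => /eqP.
have FS : F S by apply/negPn/negP => nF; move: HS; rewrite lamF ?eqxx.
have F0 : F set0 by apply: (Hdc S set0 (sub0set S) FS).
have bp : 0 < b by rewrite lt_def bpos (le_trans b'0 b'b).
pose t := b' / b.
have t0 : 0 <= t by rewrite divr_ge0 // ltW.
have t1 : t <= 1 by rewrite /t ler_pdivrMr // mul1r.
exists (fun S => t * lam S + (S == set0)%:R * (1 - t)); split.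
- move=> S'; apply: addr_ge0; first exact: mulr_ge0.
  by apply: mulr_ge0; [exact: ler0n | rewrite subr_ge0].
- move=> S' nF; have : S' != set0 by apply/eqP => E; move: nF; rewrite E F0.
  by move/negbTE ->; rewrite lamF // mulr0 mul0r addr0.
- rewrite big_split /= -mulr_sumr lam1 mulr1 -mulr_suml.
  rewrite (bigD1 set0) //= eqxx big1 ?addr0 ?mul1r => [|S' /negbTE ->] //.
  by rewrite addrC subrK.
- move=> i; rewrite big_split /= -mulr_sumr [X in _ + X]big1 ?addr0 => [|S' HiS].
    by rewrite lamz /t mulrA mulrCA divff ?mulr1.
  have : S' != set0 by apply/set0Pn; exists i.
  by move/negbTE ->; rewrite mul0r.
Qed.

Section H.
Variables (R : realFieldType) (n B : nat) (p : 'I_n -> 'I_B.+1 -> R) (y : 'I_n -> R).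
Hypothesis Hp_0 : forall i, p i ord0 = 0.
Hypothesis Hp_sum : forall i, \sum_j p i j = 1.

Lemma hval_nz_sum k : \sum_(j | j != ord0) hval p y k j = y k.
Proof.
rewrite (eq_bigr (fun j => p k j * y k)) => [|j /negbTE Hj]; last by rewrite /hval Hj.
rewrite -big_distrl /=.
have -> : \sum_(j | j != ord0) p k j = 1.
  by rewrite -(Hp_sum k) [RHS](bigD1 ord0) //= Hp_0 add0r.
by rewrite mul1r.
Qed.

Lemma hval_sum k : \sum_j hval p y k j = 1.
Proof. by rewrite (bigD1 ord0) //= hval_nz_sum /hval eqxx subrK. Qed.

Lemma sum_h_i i (j : 'I_B.+1) : j != ord0 ->
  \sum_(v : {ffun 'I_n -> 'I_B.+1} | v i == j) hprob p y v = p i j * y i.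
Proof.
move=> Hj.
rewrite (@sum_family_h _ _ _ p y _ (fun k j' => (k == i) ==> (j' == j))); last first.
  move=> v; apply/idP/forallP => [/eqP Hv k|H].
    by apply/implyP => /eqP ->; rewrite Hv.
  by have := H i; rewrite eqxx.
rewrite (bigD1 i) //= [X in _ * X]big1 ?mulr1.
  rewrite (big_pred1 j); last by move=> jj; rewrite /= eqxx.
  by rewrite /hval (negbTE Hj).
by move=> k /negbTE Hk; rewrite Hk /= hval_sum.
Qed.

Lemma sum_h_iR i (j : 'I_B.+1) (Rs : {set 'I_n}) : j != ord0 ->
  \sum_(v : {ffun 'I_n -> 'I_B.+1} | (v i == j) && (supp_set v == Rs)) hprob p y v
   = (i \in Rs)%:R * (p i j * prob_set y Rs).
Proof.
move=> Hj.
rewrite (@sum_family_h _ _ _ p y _ (fun k j' => if k == i then (j' == j) && (i \in Rs)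
                                        else (j' != ord0) == (k \in Rs))); last first.
  move=> v; apply/idP/forallP => [/andP[/eqP Hv /eqP <-] k|H].
    rewrite !inE; case: eqP => [->|_]; last by rewrite eqxx.
    by rewrite Hv eqxx /= Hj.
  have := H i; rewrite eqxx => /andP[-> HiR] /=.
  apply/eqP/setP => k; rewrite inE; have := H k.
  case: eqP => [-> /andP[/eqP -> _]|_ /eqP //]; by rewrite Hj HiR.
pose c k := if k \in Rs then y k else 1 - y k.
have Hc : forall k, k != i -> \sum_(j' | (j' != ord0) == (k \in Rs)) hval p y k j' = c k.
  move=> k _; rewrite /c; case: (k \in Rs).
    by rewrite (eq_bigl (fun j' => j' != ord0)) ?hval_nz_sum // => j'; rewrite eqb_id.
  rewrite (eq_bigl (fun j' => j' == ord0)) ?big_pred1_eq /hval ?eqxx // => j'.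
  by case: (j' == ord0).
have Hps : prob_set y Rs = \prod_k c k.
  rewrite /prob_set [RHS](bigID (fun k => k \in Rs)) /=; congr (_ * _).
    by apply: eq_bigr => k Hk; rewrite /c Hk.
  rewrite (eq_bigl (fun k => k \notin Rs)) => [|k]; last by rewrite inE.
  by apply: eq_bigr => k /negbTE Hk; rewrite /c Hk.
rewrite Hps (bigD1 i) //= [X in _ = _ * (_ * X)](bigD1 i) //= eqxx.
rewrite (eq_bigr (fun k => c k)) => [|k /negbTE Hk]; last by rewrite Hk Hc ?Hk.
rewrite /c; case: (i \in Rs).
  rewrite (big_pred1 j) => [|jj]; last by rewrite /= andbT.
  by rewrite /hval (negbTE Hj) mul1r mulrA.
by rewrite big_pred0 ?mul0r // => jj; rewrite andbF.
Qed.

End H.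

Theorem lemma3 (R : realFieldType) (n B : nat) (HB : (0 < B)%N)
  (p : 'I_n -> 'I_B.+1 -> R)
  (Hp_nonneg : forall i j, 0 <= p i j)
  (Hp_0 : forall i, p i ord0 = 0)
  (Hp_sum : forall i, \sum_j p i j = 1)
  (Fout : pred {set 'I_n}) (Hdc : downward_closed Fout)
  (beta gamma : R) (Hbeta : 0 <= beta <= 1) (Hgamma : 0 <= gamma <= 1)
  (chi : crs_type R n) (Hchi : monotone_balanced_CRS Fout beta gamma chi)
  (ybar : 'I_n -> R)
  (Hy : in_scaled_polytope Fout (Num.min beta 4%:R^-1) ybar) :
  alpha_CRS (hprob p ybar) (psi_a (B:=B) chi ybar) gamma
  /\ monotone_vmap (psi_a (B:=B) chi ybar).
Proof.
have Hmin : 0 <= Num.min beta 4%:R^-1 <= beta.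
  case/andP: Hbeta => b0 _.
  by rewrite ge_min lexx /= andbT le_min b0 invr_ge0 ler0n.
have Hpoly := @poly_mono R n Fout Hdc _ _ _ Hmin Hy.
have [Hdist Hsub Hbal Hmon] := Hchi ybar Hpoly.
split.
- split.
  + move=> v; split.
      move=> w; rewrite /psi_a; apply: sumr_ge0 => S _; apply: mulr_ge0.
        exact: (Hdist _).1.
      exact: ler0n.
    rewrite /psi_a exchange_big /=.
    transitivity (\sum_(S : {set 'I_n}) chi ybar (supp_set v) S); last exact: (Hdist _).2.
    apply: eq_bigr => S _.
    rewrite -big_distrr /= (bigD1 (restrict v S)) //= eqxx.
    rewrite [X in _ + X]big1 => [|w /negbTE -> //].
    by rewrite addr0 mulr1.
  + move=> v w Hpos i.
    case: (pickP (fun S => w == restrict v S)) => [S /eqP -> | H].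
      by rewrite ffunE; case: ifP => _; [right|left].
    move: Hpos; rewrite /psi_a big1 ?ltxx // => S _.
    by rewrite H mulr0.
  + move=> i j Hj.
    rewrite [X in _ <= X](eq_bigr (fun v => hprob p ybar v * pr_sel chi ybar (supp_set v) i)); last first.
      move=> v /eqP Hv; congr (_ * _); rewrite -Hv sum_psi_eq sum_sel_nz // Hv //.
    rewrite [X in _ <= X](partition_big (fun v : {ffun 'I_n -> 'I_B.+1} => supp_set v) predT) //=.
    rewrite [X in _ <= X](eq_bigr (fun Rs : {set 'I_n} => (i \in Rs)%:R * (p i j * prob_set ybar Rs) * pr_sel chi ybar Rs i)); last first.
      move=> Rs _; rewrite -(@sum_h_iR R n B p ybar Hp_0 Hp_sum i j Rs Hj) big_distrl /=.
      by apply: eq_bigr => v /andP[_ /eqP ->].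
    rewrite (@sum_h_i R n B p ybar Hp_0 Hp_sum i j Hj).
    have -> : \sum_(Rs : {set 'I_n}) (i \in Rs)%:R * (p i j * prob_set ybar Rs) * pr_sel chi ybar Rs i
       = p i j * \sum_(Rs : {set 'I_n} | i \in Rs) prob_set ybar Rs * pr_sel chi ybar Rs i.
      rewrite mulr_sumr [in RHS]big_mkcond /=; apply: eq_bigr => Rs _.
      case: (i \in Rs); [by rewrite mul1r mulrA | by rewrite !mul0r].
    rewrite mulrCA; apply: ler_wpM2l => //; exact: Hbal.
- move=> i u w Huw Hle.
  rewrite !sum_psi_eq.
  have [Hu0|Hunz] := eqVneq (u i) ord0.
    rewrite !sum_sel_z ?Hu0 -?Huw ?Hu0 //.
    by rewrite (Hdist _).2 (Hdist _).2.
  rewrite !sum_sel_nz -?Huw //.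
  apply: Hmon; first by rewrite inE.
  apply/subsetP => k; rewrite !inE; apply: contra => /eqP Hw.
  by apply/eqP/val_inj => /=; move: (Hle k); rewrite Hw leqn0 => /eqP.
Qed.
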